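(* Let $\alpha$ be a positive quadratic irrational. Then there is a non-identity matrix $A_0\in GL(2,\mathbb Z)$ such that $\pi(A_0)$ restricts to an isometric automorphism of $\mathcal A_\alpha$ and, for every $A\in GL(2,\mathbb Z)$ such that $\pi(A)$ restricts to an isometric automorphism of $\mathcal A_\alpha$, there is $n\in\mathbb Z$ with $A=A_0^n$ (so $\pi(A)=\pi(A_0)^n$).
   Context: For $f\in C(\mathbb T^2)$ (with $\mathbb T$ the unit circle), the Fourier transform is $\hat f(m,n)=\int_{\mathbb T^2} f(e^{is},e^{it})e^{-i(ms+nt)}\,d\mu$, $\mu$ normalized Lebesgue measure. For a positive irrational $\alpha$, $\mathcal A_\alpha=\{f\in C(\mathbb T^2): \hat f(m,n)=0 \text{ whenever } m+\alpha n<0\}$, a uniform algebra with the sup norm on $\mathbb T^2$. For $A=\begin{bmatrix} a&b\\ c&d\end{bmatrix}\in GL(2,\mathbb Z)$, $\pi(A):C(\mathbb T^2)\to C(\mathbb T^2)$ is $\pi(A)(f)=f\circ\varphi$ with $\varphi(z,w)=(z^aw^b,z^cw^d)$. *)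

(* Defs.v *)
From Stdlib Require Import Reals Lra Lia ZArith ClassicalEpsilon.
Open Scope R_scope.

(** Complex numbers as pairs (real part, imaginary part). *)
Definition C := (R * R)%type.
Definition Cmod (z : C) : R := sqrt (fst z ^ 2 + snd z ^ 2).
Definition Csub (z w : C) : C := (fst z - fst w, snd z - snd w).

(** Functions on T^2, represented by their lifts F(s,t) = f(e^{is}, e^{it}). *)
Definition torus_fun := R -> R -> C.

Definition is_CT2 (f : torus_fun) : Prop :=
  (forall s t, f (s + 2 * PI) t = f s t) /\
  (forall s t, f s (t + 2 * PI) = f s t) /\
  (forall s t eps, 0 < eps -> exists delta, 0 < delta /\
     forall s' t', Rabs (s' - s) < delta -> Rabs (t' - t) < delta ->
       Cmod (Csub (f s' t') (f s t)) < eps).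

(** Total Riemann integral: the value of the Riemann integral when the
    function is Riemann integrable on [a,b] (only used on continuous
    functions, where it is integrable). *)
Definition Rint (g : R -> R) (a b : R) : R :=
  epsilon (inhabits 0)
    (fun I => exists pr : Riemann_integrable g a b, RiemannInt pr = I).

Definition torus_integral (g : R -> R -> R) : R :=
  / (4 * PI ^ 2) * Rint (fun s => Rint (fun t => g s t) 0 (2 * PI)) 0 (2 * PI).

(** Fourier coefficient: \hat f(m,n) = ∫ f(e^{is},e^{it}) e^{-i(ms+nt)} dμ. *)
Definition fourier (f : torus_fun) (m n : Z) : C :=
  (torus_integral (fun s t =>
     let th := IZR m * s + IZR n * t in
     fst (f s t) * cos th + snd (f s t) * sin th),
   torus_integral (fun s t =>
     let th := IZR m * s + IZR n * t in
     snd (f s t) * cos th - fst (f s t) * sin th)).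

Definition in_A (alpha : R) (f : torus_fun) : Prop :=
  is_CT2 f /\
  forall m n : Z, IZR m + alpha * IZR n < 0 -> fourier f m n = (0, 0).

Definition supnorm (f : torus_fun) : R :=
  epsilon (inhabits 0)
    (fun M => is_lub (fun x => exists s t, x = Cmod (f s t)) M).

(** 2x2 integer matrices; [[a,b],[c,d]]. *)
Record mat2 := Mat2 { ma : Z; mb : Z; mc : Z; md : Z }.

Definition det2 (A : mat2) : Z := (ma A * md A - mb A * mc A)%Z.
Definition inGL2Z (A : mat2) : Prop := det2 A = 1%Z \/ det2 A = (-1)%Z.

Definition mat2_id : mat2 := Mat2 1 0 0 1.
Definition mat2_mul (A B : mat2) : mat2 :=
  Mat2 (ma A * ma B + mb A * mc B)%Z (ma A * mb B + mb A * md B)%Z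
       (mc A * ma B + md A * mc B)%Z (mc A * mb B + md A * md B)%Z.
(** Inverse for det = ±1: A^{-1} = det(A) * adj(A). *)
Definition mat2_inv (A : mat2) : mat2 :=
  let d := det2 A in
  Mat2 (d * md A)%Z (- d * mb A)%Z (- d * mc A)%Z (d * ma A)%Z.

Fixpoint mat2_pow (A : mat2) (k : nat) : mat2 :=
  match k with O => mat2_id | S k' => mat2_mul A (mat2_pow A k') end.

Definition mat2_powZ (A : mat2) (n : Z) : mat2 :=
  if (0 <=? n)%Z then mat2_pow A (Z.to_nat n)
  else mat2_pow (mat2_inv A) (Z.to_nat (- n)).

(** π(A)(f) = f ∘ φ, φ(z,w) = (z^a w^b, z^c w^d); on lifts:
    (s,t) ↦ (a s + b t, c s + d t). *)
Definition piA (A : mat2) (f : torus_fun) : torus_fun :=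
  fun s t => f (IZR (ma A) * s + IZR (mb A) * t) (IZR (mc A) * s + IZR (md A) * t).

Definition restricts_to_isometric_aut (alpha : R) (A : mat2) : Prop :=
  (forall f, in_A alpha f -> in_A alpha (piA A f)) /\
  (forall g, in_A alpha g -> exists f, in_A alpha f /\ piA A f = g) /\
  (forall f, in_A alpha f -> supnorm (piA A f) = supnorm f).

Definition irrational (x : R) : Prop :=
  forall p q : Z, q <> 0%Z -> x <> IZR p / IZR q.
Definition quadratic_irrational (x : R) : Prop :=
  irrational x /\
  exists a b c : Z, a <> 0%Z /\ IZR a * x ^ 2 + IZR b * x + IZR c = 0.

(* Main.v *)
Require Import Defs.
From Stdlib Require Import Reals ZArith.
Open Scope R_scope.

From Stdlib Require Import Lia Lra List Classical ClassicalEpsilon FunctionalExtensionality PropExtensionality.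

Ltac zr := repeat (rewrite ?plus_IZR, ?mult_IZR, ?minus_IZR, ?opp_IZR).

Definition lam (al : R) (A : mat2) : R := IZR (ma A) + IZR (mb A) * al.
Definition Eig (al : R) (A : mat2) : Prop :=
  IZR (mc A) + IZR (md A) * al = lam al A * al.
Definition Gd (al : R) (A : mat2) : Prop :=
  inGL2Z A /\ Eig al A /\ 0 < lam al A.

Lemma irr_lin al : irrational al -> forall u v : Z,
  IZR u + IZR v * al = 0 -> u = 0%Z /\ v = 0%Z.
Proof.
  intros Hi u v H.
  destruct (Z.eq_dec v 0) as [Hv|Hv].
  - subst v. simpl in H. split; [|reflexivity]. apply eq_IZR. lra.
  - exfalso. apply (Hi (- u)%Z v Hv). rewrite opp_IZR.
    apply not_0_IZR in Hv. field_simplify; [|exact Hv]. 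
    apply (Rmult_eq_reg_l (IZR v)); [|exact Hv]. field_simplify; [|exact Hv]. lra.
Qed.

Lemma lam_mul al A B : Eig al B -> lam al (mat2_mul A B) = lam al A * lam al B.
Proof. unfold Eig, lam; destruct A as [a1 b1 c1 d1], B as [a2 b2 c2 d2]; simpl; zr. intros H. 
  replace (IZR a1 * IZR a2 + IZR b1 * IZR c2 + (IZR a1 * IZR b2 + IZR b1 * IZR d2) * al)
    with (IZR a1 * (IZR a2 + IZR b2 * al) + IZR b1 * (IZR c2 + IZR d2 * al)) by ring.
  rewrite H. ring. Qed.

Lemma Eig_mul al A B : Eig al A -> Eig al B -> Eig al (mat2_mul A B).
Proof. intros HA HB. unfold Eig. rewrite lam_mul by exact HB.
  unfold Eig, lam in *; destruct A as [a1 b1 c1 d1], B as [a2 b2 c2 d2]; simpl in *; zr.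
  replace (IZR c1 * IZR a2 + IZR d1 * IZR c2 + (IZR c1 * IZR b2 + IZR d1 * IZR d2) * al)
    with (IZR c1 * (IZR a2 + IZR b2 * al) + IZR d1 * (IZR c2 + IZR d2 * al)) by ring.
  rewrite HB.
  replace (IZR c1 * (IZR a2 + IZR b2 * al) + IZR d1 * ((IZR a2 + IZR b2 * al) * al))
    with ((IZR a2 + IZR b2 * al) * (IZR c1 + IZR d1 * al)) by ring.
  rewrite HA. ring. Qed.

Lemma det_mul A B : det2 (mat2_mul A B) = (det2 A * det2 B)%Z.
Proof. destruct A, B; unfold det2; simpl; ring. Qed.

Lemma GL_mul A B : inGL2Z A -> inGL2Z B -> inGL2Z (mat2_mul A B).
Proof. unfold inGL2Z; rewrite det_mul; intros [H|H] [H'|H']; rewrite H, H'; auto. Qed.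

Lemma det_inv A : inGL2Z A -> det2 (mat2_inv A) = det2 A.
Proof. unfold inGL2Z, mat2_inv, det2; destruct A; simpl; intros [H|H]; rewrite H; lia. Qed.

Lemma GL_inv A : inGL2Z A -> inGL2Z (mat2_inv A).
Proof. intros H. unfold inGL2Z. rewrite det_inv by exact H. exact H. Qed.

Lemma mul_inv_l A : inGL2Z A -> mat2_mul (mat2_inv A) A = mat2_id.
Proof. unfold inGL2Z, mat2_inv, mat2_mul, det2, mat2_id; destruct A as [a b c d]; simpl.
  intros [H|H]; rewrite H; f_equal; lia. Qed.

Lemma mul_inv_r A : inGL2Z A -> mat2_mul A (mat2_inv A) = mat2_id.
Proof. unfold inGL2Z, mat2_inv, mat2_mul, det2, mat2_id; destruct A as [a b c d]; simpl.
  intros [H|H]; rewrite H; f_equal; lia. Qed.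

Lemma lam_id al : lam al mat2_id = 1.
Proof. unfold lam; simpl; ring. Qed.

Lemma Eig_id al : Eig al mat2_id.
Proof. unfold Eig, lam; simpl; ring. Qed.

Lemma trace_id al A : Eig al A ->
  lam al A * lam al A = IZR (ma A + md A) * lam al A - IZR (det2 A).
Proof. unfold Eig, lam, det2; destruct A as [a b c d]; simpl; zr; intro H.
  transitivity (IZR a * (IZR a + IZR b * al) + IZR b * ((IZR a + IZR b * al) * al)); [ring|].
  rewrite <- H. ring. Qed.

Lemma lam_ne0 al A : inGL2Z A -> Eig al A -> lam al A <> 0.
Proof. intros HG HE H0. pose proof (trace_id al A HE) as T. rewrite H0 in T.
  destruct HG as [D|D]; rewrite D in T; simpl in T; lra. Qed.

Lemma lam_inv al A : inGL2Z A -> Eig al A -> lam al (mat2_inv A) = / lam al A.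
Proof. intros HG HE. pose proof (lam_ne0 al A HG HE) as Hn.
  apply (Rmult_eq_reg_l (lam al A)); [|exact Hn]. rewrite Rinv_r by exact Hn.
  unfold Eig, lam, mat2_inv, inGL2Z, det2 in *; destruct A as [a b c d]; simpl in *.
  assert (HD : IZR (a*d - b*c) * IZR (a*d-b*c) = 1) by (destruct HG as [E|E]; rewrite E; simpl; lra).
  zr.
  transitivity ((IZR a * IZR d - IZR b * IZR c) * (IZR d * (IZR a + IZR b * al) - IZR b * ((IZR a + IZR b * al) * al))); [ring|].
  rewrite <- HE. zr. rewrite <- HD. zr. ring. Qed.


Lemma Eig_inv al A : inGL2Z A -> Eig al A -> Eig al (mat2_inv A).
Proof. intros HG HE. unfold Eig. rewrite lam_inv by assumption.
  pose proof (lam_ne0 al A HG HE) as Hn.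
  apply (Rmult_eq_reg_l (lam al A)); [|exact Hn].
  replace (lam al A * (/ lam al A * al)) with al by (field; exact Hn).
  unfold Eig, lam, mat2_inv, inGL2Z, det2 in *; destruct A as [a b c d]; simpl in *.
  assert (HD : IZR (a*d - b*c) * IZR (a*d-b*c) = 1) by (destruct HG as [E|E]; rewrite E; simpl; lra).
  zr.
  transitivity ((IZR a * IZR d - IZR b * IZR c) * (- IZR c * (IZR a + IZR b * al) + IZR a * ((IZR a + IZR b * al) * al))); [ring|].
  rewrite <- HE. transitivity (IZR (a * d - b * c) * IZR (a * d - b * c) * al); [zr; ring|rewrite HD; ring]. Qed.

Lemma Gd_mul al A B : Gd al A -> Gd al B -> Gd al (mat2_mul A B).
Proof. intros [G1 [E1 P1]] [G2 [E2 P2]]. split; [apply GL_mul; auto|]. split; [apply Eig_mul; auto|].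
  rewrite lam_mul by auto. nra. Qed.

Lemma Gd_inv al A : Gd al A -> Gd al (mat2_inv A).
Proof. intros [G1 [E1 P1]]. split; [apply GL_inv; auto|]. split; [apply Eig_inv; auto|].
  rewrite lam_inv by auto. apply Rinv_0_lt_compat; auto. Qed.

Lemma uniq_lam al A B : irrational al -> Eig al A -> Eig al B -> lam al A = lam al B -> A = B.
Proof. intros Hi EA EB L.
  assert (H1 : (ma A - ma B = 0 /\ mb A - mb B = 0)%Z).
  { apply (irr_lin al Hi). unfold lam in L. zr. lra. }
  assert (H2 : (mc A - mc B = 0 /\ md A - md B = 0)%Z).
  { apply (irr_lin al Hi). unfold Eig in *. rewrite L in EA. zr. lra. }
  destruct A, B; simpl in *; f_equal; lia. Qed.

Lemma gap al A : Gd al A -> ~ (1 < lam al A < 3/2).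
Proof. intros [G [E P]] [L1 L2]. pose proof (trace_id al A E) as T.
  set (l := lam al A) in *. set (t := (ma A + md A)%Z) in *.
  destruct G as [D|D]; rewrite D in T; simpl in T.
  - destruct (Z_le_gt_dec t 2) as [Ht|Ht].
    + apply IZR_le in Ht. nra.
    + assert (Ht' : (3 <= t)%Z) by lia. apply IZR_le in Ht'. nra.
  - destruct (Z_le_gt_dec t 0) as [Ht|Ht].
    + apply IZR_le in Ht. nra.
    + assert (Ht' : (1 <= t)%Z) by lia. apply IZR_le in Ht'. nra.
Qed.

Lemma Eig_pow al A k : Eig al A -> Eig al (mat2_pow A k).
Proof. intro H; induction k; simpl; [apply Eig_id|apply Eig_mul; auto]. Qed.

Lemma lam_pow al A k : Eig al A -> lam al (mat2_pow A k) = lam al A ^ k.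
Proof. intro H; induction k; simpl; [apply lam_id|]. rewrite lam_mul by (apply Eig_pow; auto).
  rewrite IHk. ring. Qed.

Lemma mat2_mul_assoc A B C : mat2_mul A (mat2_mul B C) = mat2_mul (mat2_mul A B) C.
Proof. destruct A, B, C; unfold mat2_mul; simpl; f_equal; ring. Qed.

Lemma pow_unbounded (x y : R) : 1 < x -> exists n : nat, y < x ^ n.
Proof. intros Hx.
  assert (B : forall n, 1 + INR n * (x - 1) <= x ^ n).
  { induction n; [simpl; lra|]. rewrite S_INR. simpl.
    assert (0 <= INR n) by apply pos_INR.
    assert (1 <= x ^ n) by (apply pow_R1_Rle; lra). nra. }
  destruct (archimed (y / (x - 1))) as [H1 _].
  exists (Z.to_nat (up (y / (x - 1)))).
  specialize (B (Z.to_nat (up (y / (x - 1))))).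
  destruct (Z_le_gt_dec 0 (up (y / (x - 1)))) as [Hp|Hp].
  - rewrite INR_IZR_INZ, Z2Nat.id in B by exact Hp.
    assert (y / (x-1) * (x - 1) = y) by (field; lra). nra.
  - assert (IZR (up (y / (x-1))) <= -1) by (apply IZR_le; lia).
    assert (y / (x-1) * (x - 1) = y) by (field; lra).
    assert (0 <= INR (Z.to_nat (up (y / (x - 1))))) by apply pos_INR. nra.
Qed.


Lemma lam_mul_inv al A B : Gd al A -> Gd al B ->
  lam al (mat2_mul A (mat2_inv B)) = lam al A / lam al B.
Proof. intros HA [G [E P]]. rewrite lam_mul by (apply Eig_inv; auto). rewrite lam_inv by auto.
  reflexivity. Qed.

Lemma min_exists al : (exists A, Gd al A /\ 1 < lam al A) ->
  exists A0, Gd al A0 /\ 1 < lam al A0 /\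
     forall B, Gd al B -> 1 < lam al B -> lam al A0 <= lam al B.
Proof. intros Hne.
  set (E := fun x => exists B, Gd al B /\ 1 < lam al B /\ x = - lam al B).
  assert (Hb : bound E). { exists (-1). intros x [B [_ [H1 H2]]]. lra. }
  assert (Hn : exists x, E x). { destruct Hne as [A [H1 H2]]. exists (- lam al A). exists A; auto. }
  destruct (completeness E Hb Hn) as [m [Hub Hlub]].
  assert (Hlow : forall B, Gd al B -> 1 < lam al B -> - m <= lam al B).
  { intros B H1 H2. assert (E (- lam al B)) by (exists B; auto). apply Hub in H. lra. }
  assert (Hm1 : m <= -1). { apply Hlub. intros x [B [_ [H1 H2]]]. lra. }
  assert (Happ : forall eps, 0 < eps -> exists B, Gd al B /\ 1 < lam al B /\ lam al B < - m + eps).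
  { intros eps He. apply NNPP. intro Hc. assert (m <= m - eps); [|lra].
    apply Hlub. intros x [B [H1 [H2 H3]]]. subst x. apply Rnot_lt_le. intro Hl.
    apply Hc. exists B. split; [exact H1|split; [exact H2|lra]]. }
  destruct (classic (exists A0, Gd al A0 /\ 1 < lam al A0 /\ lam al A0 = - m)) as
    [[A0 [H1 [H2 H3]]]|Hno].
  - exists A0. split; [exact H1|split; [exact H2|]]. intros B HB HB1. rewrite H3. apply Hlow; auto.
  - exfalso.
    destruct (Happ (- m / 2)) as [B1 [G1 [L1 U1]]]; [lra|].
    assert (S1 : - m < lam al B1).
    { destruct (Rle_lt_or_eq_dec _ _ (Hlow B1 G1 L1)) as [h|h]; auto. exfalso; apply Hno; eauto. }
    destruct (Happ (lam al B1 + m)) as [B2 [G2 [L2 U2]]]; [lra|].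
    assert (S2 : - m < lam al B2).
    { destruct (Rle_lt_or_eq_dec _ _ (Hlow B2 G2 L2)) as [h|h]; auto. exfalso; apply Hno; eauto. }
    apply (gap al (mat2_mul B1 (mat2_inv B2))).
    + apply Gd_mul; auto. apply Gd_inv; auto.
    + rewrite lam_mul_inv by auto. split.
      * apply (Rmult_lt_reg_r (lam al B2)); [lra|]. unfold Rdiv. rewrite Rmult_assoc, Rinv_l by lra. lra.
      * apply (Rmult_lt_reg_r (lam al B2)); [lra|]. unfold Rdiv. rewrite Rmult_assoc, Rinv_l by lra. nra.
Qed.

Lemma powZ_nat A k : mat2_powZ A (Z.of_nat k) = mat2_pow A k.
Proof. unfold mat2_powZ. replace (0 <=? Z.of_nat k)%Z with true by (symmetry; apply Z.leb_le; lia).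
  rewrite Nat2Z.id. reflexivity. Qed.

Lemma powZ_neg A k : (0 < k)%nat -> mat2_powZ A (- Z.of_nat k) = mat2_pow (mat2_inv A) k.
Proof. intro H. unfold mat2_powZ. replace (0 <=? - Z.of_nat k)%Z with false by (symmetry; apply Z.leb_gt; lia).
  rewrite Z.opp_involutive, Nat2Z.id. reflexivity. Qed.

Lemma cyclic al A0 : irrational al -> Gd al A0 -> 1 < lam al A0 ->
  (forall B, Gd al B -> 1 < lam al B -> lam al A0 <= lam al B) ->
  forall B, Gd al B -> exists n, B = mat2_powZ A0 n.
Proof. intros Hi G0 L0 Hmin.
  destruct G0 as [GG0 [E0 P0]].
  assert (Hpos : forall N B, Gd al B -> 1 <= lam al B < lam al A0 ^ N ->
     exists k, lam al B = lam al A0 ^ k).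
  { induction N as [|N IH]; intros B HB [H1 H2]; simpl in H2; [lra|].
    destruct (Rlt_or_le (lam al B) (lam al A0)) as [h|h].
    - exists 0%nat. simpl. destruct (Rle_lt_or_eq_dec _ _ H1) as [h'|h']; [|auto].
      specialize (Hmin B HB h'). lra.
    - destruct (IH (mat2_mul B (mat2_inv A0))) as [k Hk].
      + apply Gd_mul; auto. apply Gd_inv. split; auto.
      + rewrite lam_mul_inv by (auto; split; auto). split.
        * apply (Rmult_le_reg_r (lam al A0)); [lra|]. unfold Rdiv. rewrite Rmult_assoc, Rinv_l by lra. lra.
        * apply (Rmult_lt_reg_r (lam al A0)); [lra|]. unfold Rdiv. rewrite Rmult_assoc, Rinv_l by lra. lra.
      + exists (S k). rewrite lam_mul_inv in Hk by (auto; split; auto). simpl.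
        rewrite <- Hk. field. lra. }
  intros B HB.
  destruct (Rle_or_lt 1 (lam al B)) as [h|h].
  - destruct (pow_unbounded (lam al A0) (lam al B) L0) as [N HN].
    destruct (Hpos N B HB (conj h HN)) as [k Hk].
    exists (Z.of_nat k). rewrite powZ_nat. apply uniq_lam with al; auto.
    + apply HB.
    + apply Eig_pow; auto.
    + rewrite lam_pow by auto. auto.
  - assert (HBi : Gd al (mat2_inv B)) by (apply Gd_inv; auto).
    destruct HB as [GB [EB PB]].
    assert (Li : 1 <= lam al (mat2_inv B)).
    { rewrite lam_inv by auto. rewrite <- Rinv_1. left. apply Rinv_lt_contravar; lra. }
    destruct (pow_unbounded (lam al A0) (lam al (mat2_inv B)) L0) as [N HN].
    destruct (Hpos N _ HBi (conj Li HN)) as [k Hk].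
    destruct k as [|k].
    + simpl in Hk. rewrite lam_inv in Hk by auto. exists 0%Z.
      apply uniq_lam with al; auto. simpl. apply Eig_id. simpl. rewrite lam_id.
      rewrite <- (Rinv_inv (lam al B)), Hk. apply Rinv_1.
    + exists (- Z.of_nat (S k))%Z. rewrite powZ_neg by lia.
      apply uniq_lam with al; auto.
      * apply Eig_pow, Eig_inv; auto.
      * rewrite lam_pow by (apply Eig_inv; auto). rewrite lam_inv by auto.
        rewrite lam_inv in Hk by auto. rewrite pow_inv, <- Hk. rewrite Rinv_inv. reflexivity.
Qed.


Lemma pigeon {T : Type} (f : nat -> T) (L : list T) (N : nat) :
  (forall i, (i <= N)%nat -> In (f i) L) -> (length L <= N)%nat ->
  exists i j, (i < j <= N)%nat /\ f i = f j.
Proof. intros HL Hlen. apply NNPP. intro Hc.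
  assert (ND : NoDup (map f (seq 0 (S N)))).
  { apply NoDup_map_NoDup_ForallPairs; [|apply seq_NoDup].
    intros x y Hx Hy Hf. apply in_seq in Hx, Hy.
    destruct (Nat.lt_trichotomy x y) as [h|[h|h]]; auto; exfalso; apply Hc.
    - exists x, y; split; [lia|auto].
    - exists y, x; split; [lia|auto]. }
  assert (Hi : incl (map f (seq 0 (S N))) L).
  { intros z Hz. apply in_map_iff in Hz. destruct Hz as [i [<- Hi]]. apply in_seq in Hi. apply HL. lia. }
  pose proof (NoDup_incl_length ND Hi). rewrite length_map, length_seq in H. lia. Qed.

Definition fl (x : R) : Z := (up x - 1)%Z.
Lemma fl_spec x : IZR (fl x) <= x < IZR (fl x) + 1.
Proof. unfold fl. destruct (archimed x) as [H1 H2]. rewrite minus_IZR. simpl. lra. Qed.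

Lemma dirichlet (g : R) (N : nat) : (1 <= N)%nat ->
  exists u v : Z, (1 <= v <= Z.of_nat N)%Z /\ Rabs (IZR u + IZR v * g) < / INR N.
Proof. intros HN.
  set (r := fun i : nat => INR i * g - IZR (fl (INR i * g))).
  assert (Hr : forall i, 0 <= r i < 1) by (intro i; unfold r; pose proof (fl_spec (INR i * g)); lra).
  assert (HNr : 0 < INR N) by (apply lt_0_INR; lia).
  set (bx := fun i => Z.to_nat (fl (INR N * r i))).
  assert (Hbx : forall i, (0 <= fl (INR N * r i) < Z.of_nat N)%Z).
  { intro i. pose proof (fl_spec (INR N * r i)). pose proof (Hr i). split.
    - assert (-1 < fl (INR N * r i))%Z by (apply lt_IZR; simpl; nra). lia.
    - apply lt_IZR. rewrite <- INR_IZR_INZ. nra. }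
  destruct (pigeon bx (seq 0 N) N) as [i [j [Hij Heq]]].
  { intros i _. apply in_seq. specialize (Hbx i). unfold bx. lia. }
  { rewrite length_seq. lia. }
  exists (fl (INR i * g) - fl (INR j * g))%Z, (Z.of_nat j - Z.of_nat i)%Z. split; [lia|].
  unfold bx in Heq. apply (f_equal Z.of_nat) in Heq. rewrite !Z2Nat.id in Heq by (apply Hbx).
  pose proof (fl_spec (INR N * r i)) as Fi. pose proof (fl_spec (INR N * r j)) as Fj.
  rewrite Heq in Fi.
  assert (Habs : Rabs (INR N * r j - INR N * r i) < 1) by (apply Rabs_def1; lra).
  replace (IZR (fl (INR i * g) - fl (INR j * g)) + IZR (Z.of_nat j - Z.of_nat i) * g)
    with (r j - r i) by (unfold r; rewrite !minus_IZR, <- !INR_IZR_INZ; ring).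
  replace (INR N * r j - INR N * r i) with (INR N * (r j - r i)) in Habs by ring.
  rewrite Rabs_mult, Rabs_right in Habs by lra.
  apply (Rmult_lt_reg_l (INR N)); auto. rewrite Rinv_r by lra. exact Habs. Qed.

Definition dd (g : R) (p : Z * Z) : R := Rabs (IZR (fst p) + IZR (snd p) * g).
Definition good (g : R) (p : Z * Z) : Prop :=
  (1 <= snd p)%Z /\ dd g p < / IZR (snd p).

Lemma step (g : R) (d : R) : 0 < d -> exists p, good g p /\ dd g p < d.
Proof. intros Hd.
  set (N := (Z.to_nat (up (/ d)) + 1)%nat).
  destruct (dirichlet g N) as [u [v [Hv Hu]]]; [unfold N; lia|].
  exists (u, v). unfold good, dd; simpl.
  assert (HN : / d < INR N).
  { unfold N. rewrite plus_INR. simpl. destruct (archimed (/ d)) as [H1 _].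
    destruct (Z_le_gt_dec 0 (up (/ d))) as [h|h].
    - rewrite INR_IZR_INZ, Z2Nat.id by exact h. lra.
    - assert (IZR (up (/d)) <= -1) by (apply IZR_le; lia). pose proof (pos_INR (Z.to_nat (up (/d)))). lra. }
  assert (Hvpos : 0 < IZR v) by (apply IZR_lt; lia).
  assert (HvN : IZR v <= INR N) by (rewrite INR_IZR_INZ; apply IZR_le; lia).
  split; [split; [lia|]|].
  - eapply Rlt_le_trans; [exact Hu|]. apply Rinv_le_contravar; auto.
  - eapply Rlt_trans; [exact Hu|]. rewrite <- (Rinv_inv d). apply Rinv_lt_contravar; auto.
    apply Rmult_lt_0_compat; [|lra]. apply Rinv_0_lt_compat; auto.
Qed.

Lemma dd_pos g p : irrational g -> good g p -> 0 < dd g p.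
Proof. intros Hi [H1 _]. unfold dd. apply Rabs_pos_lt. intro H.
  destruct (irr_lin g Hi _ _ H). lia. Qed.

Definition st (g : R) (d : R) : Z * Z :=
  epsilon (inhabits (0%Z, 0%Z)) (fun p => good g p /\ dd g p < d).

Fixpoint Pseq (g : R) (n : nat) : Z * Z :=
  match n with O => st g 1 | S n' => st g (dd g (Pseq g n')) end.

Lemma Pseq_good g : irrational g -> forall n, good g (Pseq g n) /\
   dd g (Pseq g (S n)) < dd g (Pseq g n).
Proof. intros Hi.
  assert (G : forall n, good g (Pseq g n)).
  { induction n; simpl.
    - unfold st. apply (epsilon_spec (inhabits (0%Z,0%Z)) (fun p => good g p /\ dd g p < 1)).
      apply step; lra.
    - unfold st. apply (epsilon_spec (inhabits (0%Z,0%Z)) (fun p => good g p /\ dd g p < dd g (Pseq g n))).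
      apply step. apply dd_pos; auto. }
  intro n; split; auto. simpl. unfold st.
  apply (epsilon_spec (inhabits (0%Z,0%Z)) (fun p => good g p /\ dd g p < dd g (Pseq g n))).
  apply step. apply dd_pos; auto. Qed.

Lemma Pseq_dec g : irrational g -> forall i j, (i < j)%nat -> dd g (Pseq g j) < dd g (Pseq g i).
Proof. intros Hi i j Hij. induction Hij.
  - apply Pseq_good; auto.
  - eapply Rlt_trans; [apply Pseq_good; auto|exact IHHij]. Qed.

Definition zr (lo : Z) (n : nat) : list Z := map (fun i => (lo + Z.of_nat i)%Z) (seq 0 n).
Lemma zr_in lo n x : (lo <= x < lo + Z.of_nat n)%Z -> In x (zr lo n).
Proof. intro H. unfold zr. apply in_map_iff. exists (Z.to_nat (x - lo)). split; [lia|].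
  apply in_seq. lia. Qed.
Lemma zr_len lo n : length (zr lo n) = n.
Proof. unfold zr. rewrite length_map, length_seq. reflexivity. Qed.

Definition NN (B C x y : Z) : Z := (x*x - B*x*y + C*y*y)%Z.

Lemma pell (g : R) (B C : Z) : irrational g -> g * g + IZR B * g + IZR C = 0 ->
  exists x y, y <> 0%Z /\ NN B C x y = 1%Z.
Proof. intros Hi Hq.
  assert (Hnorm : forall x y, IZR (NN B C x y) = (IZR x + IZR y * g) * (IZR x - IZR B * IZR y - IZR y * g)).
  { intros x y. unfold NN. zr. transitivity ((IZR x + IZR y * g) * (IZR x - IZR B * IZR y - IZR y * g) + IZR y * IZR y * (g * g + IZR B * g + IZR C)); [ring|]. rewrite Hq. ring. }
  set (M := 1 + Rabs (IZR B + 2 * g)).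
  set (K := up M).
  assert (HK : M < IZR K) by (apply archimed).
  assert (HK1 : (1 <= K)%Z).
  { apply le_IZR. unfold M in HK. pose proof (Rabs_pos (IZR B + 2*g)). change (IZR 1) with 1. lra. }
  set (P := Pseq g).
  set (Nj := fun j => NN B C (fst (P j)) (snd (P j))).
  assert (HNb : forall j, (- K < Nj j < K)%Z /\ Nj j <> 0%Z).
  { intro j. destruct (Pseq_good g Hi j) as [[Hv Hd] _]. fold P in Hv, Hd.
    unfold Nj. destruct (P j) as [u v]. unfold dd in Hd; simpl in *.
    assert (Hvp : 1 <= IZR v) by (apply IZR_le; auto).
    set (e := IZR u + IZR v * g) in *.
    assert (He1 : Rabs e * IZR v < 1).
    { apply (Rmult_lt_compat_r (IZR v)) in Hd; [|lra]. rewrite Rinv_l in Hd by lra. exact Hd. }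
    assert (He0 : Rabs e < 1) by nra.
    assert (Hf : Rabs (IZR u - IZR B * IZR v - IZR v * g) <= Rabs e + IZR v * Rabs (IZR B + 2 * g)).
    { replace (IZR u - IZR B * IZR v - IZR v * g) with (e + (- IZR v) * (IZR B + 2 * g)) by (unfold e; ring).
      eapply Rle_trans; [apply Rabs_triang|]. rewrite Rabs_mult, Rabs_Ropp, (Rabs_right (IZR v)) by lra. lra. }
    assert (Hb : Rabs (IZR (NN B C u v)) < M).
    { rewrite Hnorm. fold e. rewrite Rabs_mult.
      pose proof (Rabs_pos e). pose proof (Rabs_pos (IZR B + 2 * g)).
      pose proof (Rabs_pos (IZR u - IZR B * IZR v - IZR v * g)).
      unfold M. nra. }
    split.
    - apply Rabs_def2 in Hb. destruct Hb. split; apply lt_IZR; rewrite ?opp_IZR; lra.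
    - intro H0. apply (f_equal IZR) in H0. rewrite Hnorm in H0. simpl in H0.
      apply Rmult_integral in H0. destruct H0 as [H0|H0].
      + destruct (irr_lin g Hi u v H0). lia.
      + destruct (irr_lin g Hi (u - B * v) (- v)); [zr; lra|lia]. }
  set (cls := fun j => (Nj j, (fst (P j) mod Z.abs (Nj j))%Z, (snd (P j) mod Z.abs (Nj j))%Z)).
  set (KK := Z.to_nat K).
  set (L := list_prod (list_prod (zr (- K) (2 * KK)) (zr 0 KK)) (zr 0 KK)).
  destruct (pigeon cls L (2 * KK * KK * KK)) as [i [j [Hij Hc]]].
  { intros j _. unfold cls, L. destruct (HNb j) as [Hb Hn].
    assert (Ha : (0 < Z.abs (Nj j) <= K)%Z) by lia.
    repeat apply in_prod; apply zr_in; unfold KK.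
    - lia.
    - pose proof (Z.mod_pos_bound (fst (P j)) (Z.abs (Nj j))). lia.
    - pose proof (Z.mod_pos_bound (snd (P j)) (Z.abs (Nj j))). lia. }
  { unfold L. rewrite !length_prod, !zr_len. lia. }
  unfold cls in Hc. injection Hc. intros Hv Hu Hk.
  pose proof (Pseq_dec g Hi i j (proj1 Hij)) as Hdec.
  destruct (Pseq_good g Hi i) as [[Hvi _] _]. destruct (Pseq_good g Hi j) as [[Hvj _] _].
  fold P in Hdec, Hvi, Hvj.
  destruct (HNb i) as [_ Hk0].
  unfold Nj in *. rewrite <- Hk in Hu, Hv.
  destruct (P i) as [u1 v1], (P j) as [u2 v2]. simpl in *.
  set (k := NN B C u1 v1) in *.
  assert (Hka : Z.abs k <> 0%Z) by lia.
  assert (Es : exists s, u2 = (u1 + k * s)%Z).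
  { exists (Z.sgn k * (u2 / Z.abs k - u1 / Z.abs k))%Z.
    pose proof (Z.div_mod u1 (Z.abs k) Hka). pose proof (Z.div_mod u2 (Z.abs k) Hka).
    rewrite Hu in H. pose proof (Z.sgn_abs k).
    set (q1 := (u1 / Z.abs k)%Z) in *. set (q2 := (u2 / Z.abs k)%Z) in *. set (rr := (u2 mod Z.abs k)%Z) in *.
    assert (Z.sgn k * Z.sgn k = 1)%Z by (destruct k; simpl; lia). nia. }
  assert (Et : exists t, v2 = (v1 + k * t)%Z).
  { exists (Z.sgn k * (v2 / Z.abs k - v1 / Z.abs k))%Z.
    pose proof (Z.div_mod v1 (Z.abs k) Hka). pose proof (Z.div_mod v2 (Z.abs k) Hka).
    rewrite Hv in H. pose proof (Z.sgn_abs k).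
    set (q1 := (v1 / Z.abs k)%Z) in *. set (q2 := (v2 / Z.abs k)%Z) in *. set (rr := (v2 mod Z.abs k)%Z) in *.
    assert (Z.sgn k * Z.sgn k = 1)%Z by (destruct k; simpl; lia). nia. }
  destruct Es as [s Es], Et as [t Et].
  exists (1 + u1 * s - B * u1 * t + C * v1 * t)%Z, (v1 * s - u1 * t)%Z.
  assert (Hcomp : (k * k * NN B C (1 + u1 * s - B * u1 * t + C * v1 * t) (v1 * s - u1 * t)
                  = NN B C u1 v1 * NN B C u2 v2)%Z).
  { rewrite Es, Et. unfold k, NN. ring. }
  split.
  - intro Hy. apply Rlt_irrefl with (dd g (u2, v2)).
    assert (Hy2 : (v1 * u2 = u1 * v2)%Z) by (rewrite Es, Et; nia).
    assert (Hvv : (v1 * v1 * NN B C u2 v2 = v2 * v2 * NN B C u1 v1)%Z).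
    { unfold NN. transitivity ((v1*u2)*(v1*u2) - B*(v1*u2)*v1*v2 + C*v1*v1*v2*v2)%Z; [ring|].
      rewrite Hy2. ring. }
    rewrite <- Hk in Hvv. fold k in Hvv.
    assert (H1 : ((v1 * v1 - v2 * v2) * k = 0)%Z) by lia.
    apply Z.mul_eq_0 in H1. destruct H1 as [H1|H1]; [|contradiction].
    assert (H2 : ((v1 - v2) * (v1 + v2) = 0)%Z) by nia.
    apply Z.mul_eq_0 in H2. assert (v1 = v2) by lia. subst v2.
    assert (H3 : ((u2 - u1) * v1 = 0)%Z) by nia.
    apply Z.mul_eq_0 in H3. assert (u1 = u2) by lia. clear Hc. revert Hdec. replace (u1 + k * s)%Z with u1 by lia. replace (v1 + k * t)%Z with v1 by lia. intro Hd. rewrite <- H0 in *. lra.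
  - rewrite <- Hk in Hcomp. fold k in Hcomp. nia.
Qed.


Definition mneg (A : mat2) : mat2 := Mat2 (- ma A) (- mb A) (- mc A) (- md A).

Lemma mneg_GL A : inGL2Z A -> inGL2Z (mneg A).
Proof. unfold inGL2Z, det2, mneg; destruct A; simpl. intros [H|H]; [left|right]; lia. Qed.
Lemma mneg_lam al A : lam al (mneg A) = - lam al A.
Proof. unfold lam, mneg; destruct A; simpl; zr; ring. Qed.
Lemma mneg_Eig al A : Eig al A -> Eig al (mneg A).
Proof. unfold Eig; rewrite mneg_lam; unfold lam, mneg; destruct A; simpl; zr; intro H; lra. Qed.

Lemma get_gt1 al A : inGL2Z A -> Eig al A -> lam al A <> 1 -> lam al A <> -1 ->
  exists B, Gd al B /\ 1 < lam al B.
Proof. intros G E N1 N2. pose proof (lam_ne0 al A G E) as N0.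
  assert (Pinv : forall C, Gd al C -> lam al C < 1 -> exists B, Gd al B /\ 1 < lam al B).
  { intros C HC HL. exists (mat2_inv C). split; [apply Gd_inv; auto|].
    destruct HC as [? [? ?]]. rewrite lam_inv by auto.
    rewrite <- Rinv_1. apply Rinv_lt_contravar; lra. }
  destruct (Rlt_or_le 0 (lam al A)) as [h|h].
  - destruct (Rlt_or_le 1 (lam al A)) as [h'|h'].
    + exists A; repeat split; auto.
    + apply (Pinv A); [split; auto|lra].
  - assert (HG : Gd al (mneg A)).
    { split; [apply mneg_GL; auto|split; [apply mneg_Eig; auto|rewrite mneg_lam; lra]]. }
    destruct (Rlt_or_le 1 (lam al (mneg A))) as [h'|h'].
    + exists (mneg A); auto.
    + apply (Pinv (mneg A)); auto. rewrite mneg_lam in *. lra.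
Qed.

Lemma exists_unit al : quadratic_irrational al -> exists A, Gd al A /\ 1 < lam al A.
Proof. intros [Hi [a [b [c [Ha Hq]]]]].
  set (g := IZR a * al).
  assert (Hai : IZR a <> 0) by (apply not_0_IZR; auto).
  assert (Hgi : irrational g).
  { intros p q Hq0 Hg. apply (Hi p (a * q)%Z); [lia|]. rewrite mult_IZR.
    apply not_0_IZR in Hq0. unfold g in Hg.
    apply (Rmult_eq_reg_l (IZR a)); auto. rewrite Hg. field. auto. }
  assert (Hgq : g * g + IZR b * g + IZR (a * c) = 0).
  { unfold g. rewrite mult_IZR.
    transitivity (IZR a * (IZR a * al ^ 2 + IZR b * al + IZR c)); [ring|]. rewrite Hq. ring. }
  destruct (pell g b (a * c) Hgi Hgq) as [x [y [Hy HN]]].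
  apply (get_gt1 al (Mat2 x (a * y) (- c * y) (x - b * y))).
  - left. unfold det2; simpl. unfold NN in HN. lia.
  - unfold Eig, lam; simpl. zr.
    transitivity (IZR x * al - IZR y * (IZR a * al ^ 2 + IZR b * al + IZR c) + IZR y * (IZR a * al * al) ); [ring|].
    rewrite Hq. ring.
  - unfold lam; simpl. intro H. destruct (irr_lin al Hi (x - 1) (a * y)) as [_ H2]; [rewrite minus_IZR; simpl; lra|]. apply Z.mul_eq_0 in H2; lia.
  - unfold lam; simpl. intro H. destruct (irr_lin al Hi (x + 1) (a * y)) as [_ H2]; [rewrite plus_IZR; simpl; lra|]. apply Z.mul_eq_0 in H2; lia.
Qed.


Open Scope R_scope.
From Coquelicot Require Import Coquelicot.

Definition cf (f : R -> R) : Prop := forall x, continuity_pt f x.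
Definition cont2 (g : R -> R -> R) : Prop := forall x y, continuity_2d_pt g x y.

Lemma cf_cont f : cf f -> forall x, continuous f x.
Proof. intros H x. apply continuity_pt_filterlim. apply H. Qed.

Lemma exR f a b : cf f -> ex_RInt f a b.
Proof. intros H. apply (ex_RInt_continuous (V := R_CompleteNormedModule)). intros z _. apply cf_cont; auto. Qed.

Lemma Rint_RInt f a b : cf f -> a <= b -> Rint f a b = RInt f a b.
Proof. intros Hc Hab.
  assert (pr : Riemann_integrable f a b) by (apply continuity_implies_RiemannInt; auto).
  unfold Rint.
  destruct (epsilon_spec (inhabits 0) (fun I => exists pr : Riemann_integrable f a b, RiemannInt pr = I))
    as [pr' Hpr']; [exists (RiemannInt pr); exists pr; reflexivity|].
  rewrite <- Hpr'. symmetry. apply RInt_Reals. Qed.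

Lemma cont2_swap g : cont2 g -> cont2 (fun x y => g y x).
Proof. intros H x y eps. destruct (H y x eps) as [d Hd]. exists d. intros u v Hu Hv. apply Hd; auto. Qed.

Lemma cont2_slice g s : cont2 g -> cf (g s).
Proof. intros H t. unfold continuity_pt, continue_in, limit1_in, limit_in. intros eps He.
  destruct (H s t (mkposreal eps He)) as [d Hd]. exists d. split; [apply cond_pos|].
  intros x [_ Hx]. simpl in *. unfold R_dist in *. apply Hd; auto. rewrite Rminus_diag, Rabs_R0. apply cond_pos. Qed.

Lemma RInt_bound f a b M : cf f -> (forall t, Rmin a b <= t <= Rmax a b -> Rabs (f t) <= M) ->
  Rabs (RInt f a b) <= Rabs (b - a) * M.
Proof. intros Hc HM. destruct (Rle_or_lt a b) as [h|h].
  - rewrite (Rabs_right (b - a)) by lra. apply abs_RInt_le_const; auto. apply exR; auto.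
    intros t Ht. apply HM. rewrite Rmin_left, Rmax_right; lra.
  - rewrite <- opp_RInt_swap by (apply exR; auto). unfold opp; simpl. rewrite Rabs_Ropp.
    rewrite (Rabs_left (b - a)) by lra. replace (- (b - a)) with (a - b) by ring.
    apply abs_RInt_le_const; [lra|apply exR; auto|].
    intros t Ht. apply HM. rewrite Rmin_right, Rmax_left; lra. Qed.

Lemma PC g a b : cont2 g -> cf (fun t => RInt (fun s => g s t) a b).
Proof. intros H t0. unfold continuity_pt, continue_in, limit1_in, limit_in. intros eps He.
  set (w := Rabs (b - a) + 1).
  assert (Hw : 0 < w) by (unfold w; pose proof (Rabs_pos (b - a)); lra).
  assert (He' : 0 < eps / (2 * w)) by (apply Rdiv_lt_0_compat; lra).
  destruct (uniform_continuity_2d_1d g (Rmin a b) (Rmax a b) t0 (fun x _ => H x t0) (mkposreal _ He'))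
    as [d Hd].
  exists d. split; [apply cond_pos|]. intros t [_ Ht]. simpl in *. unfold R_dist in *.
  assert (Hs : forall s, cf (fun u => g u s)) by (intros s; exact (cont2_slice (fun x y => g y x) s (cont2_swap g H))).
  replace (RInt (fun s => g s t) a b - RInt (fun s => g s t0) a b)
    with (RInt (fun s => g s t - g s t0) a b).
  2:{ pose proof (RInt_minus (fun s => g s t) (fun s => g s t0) a b (exR _ _ _ (Hs t)) (exR _ _ _ (Hs t0))) as E.
      unfold minus, plus, opp in E; simpl in E. exact E. }
  eapply Rle_lt_trans; [apply RInt_bound with (M := eps / (2 * w))|].
  - intros x. apply continuity_pt_minus; [apply Hs|apply Hs].
  - intros s Hs'. left. pose proof (cond_pos d). destruct (Rabs_def2 _ _ Ht).
    apply Hd; auto; try lra. rewrite Rminus_diag, Rabs_R0. apply cond_pos.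
  - unfold w. pose proof (Rabs_pos (b - a)).
    apply (Rmult_lt_reg_r (2 * (Rabs (b - a) + 1))); [lra|].
    field_simplify; [|lra]. nra. Qed.


From Coquelicot Require Import Coquelicot.

Definition per1 (h : R -> R) : Prop := forall x, h (x + 2 * PI) = h x.

Lemma scalR (u x : R) : scal u x = u * x.
Proof. reflexivity. Qed.

Lemma shift_per h : cf h -> per1 h -> forall x, RInt h x (x + 2 * PI) = RInt h 0 (2 * PI).
Proof. intros Hc Hp x.
  assert (E1 : RInt h (2 * PI) (x + 2 * PI) = RInt h 0 x).
  { pose proof (RInt_comp_lin h 1 (2 * PI) 0 x (exR _ _ _ Hc)) as E.
    replace (1 * 0 + 2 * PI) with (2 * PI) in E by ring.
    replace (1 * x + 2 * PI) with (x + 2 * PI) in E by ring. rewrite <- E.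
    apply RInt_ext. intros y _. rewrite scalR. rewrite Rmult_1_l.
    replace (1 * y + 2 * PI) with (y + 2 * PI) by ring. rewrite Hp. reflexivity. }
  pose proof (RInt_Chasles h x 0 (2 * PI) (exR _ _ _ Hc) (exR _ _ _ Hc)) as C1.
  pose proof (RInt_Chasles h x (2 * PI) (x + 2 * PI) (exR _ _ _ Hc) (exR _ _ _ Hc)) as C2.
  pose proof (opp_RInt_swap h x 0 (exR _ _ _ Hc)) as C3.
  unfold plus, opp in *; simpl in *. lra. Qed.

Lemma lin_per h : cf h -> per1 h -> forall c e, (e = 1 \/ e = -1) ->
  RInt (fun t => h (c + e * t)) 0 (2 * PI) = RInt h 0 (2 * PI).
Proof. intros Hc Hp c e [He|He]; subst e.
  - pose proof (RInt_comp_lin h 1 c 0 (2 * PI) (exR _ _ _ Hc)) as E.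
    replace (1 * 0 + c) with c in E by ring.
    replace (1 * (2 * PI) + c) with (c + 2 * PI) in E by ring.
    rewrite shift_per in E by auto. rewrite <- E.
    apply RInt_ext. intros y _. change (scal 1 (h (1 * y + c))) with (1 * h (1 * y + c)). replace (1 * y + c) with (c + 1 * y) by ring. symmetry; apply Rmult_1_l.
  - pose proof (RInt_comp_lin h (-1) c 0 (2 * PI) (exR _ _ _ Hc)) as E.
    replace (-1 * 0 + c) with c in E by ring.
    replace (-1 * (2 * PI) + c) with (c - 2 * PI) in E by ring.
    assert (S1 : RInt h (c - 2 * PI) c = RInt h 0 (2 * PI)).
    { rewrite <- (shift_per h Hc Hp (c - 2 * PI)). f_equal. ring. }
    pose proof (opp_RInt_swap h (c - 2 * PI) c (exR _ _ _ Hc)) as S2.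
    rewrite <- S2, S1 in E. unfold opp in E; simpl in E.
    rewrite <- (Ropp_involutive (RInt h 0 (2 * PI))), <- E.
    rewrite <- (RInt_opp (V := R_CompleteNormedModule)).
    2:{ apply exR. intro x. apply continuity_pt_scal. apply continuity_pt_comp.
        apply continuity_pt_plus. apply continuity_pt_scal. apply continuity_pt_id. apply continuity_pt_const. intros a b; reflexivity. apply Hc. }
    apply RInt_ext. intros y _. unfold opp; simpl. change (scal (-1) (h (-1 * y + c))) with (-1 * h (-1 * y + c)). 
    replace (-1 * y + c) with (c + -1 * y) by ring. ring.
Qed.

Lemma cf_phi g a : cont2 g -> cf (fun s => RInt (fun t => g s t) 0 a).
Proof. intro H. exact (PC (fun x y => g y x) 0 a (cont2_swap g H)). Qed.

Lemma cf_sl2 g t : cont2 g -> cf (fun s => g s t).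
Proof. intro H. exact (cont2_slice (fun x y => g y x) t (cont2_swap g H)). Qed.

Lemma fubini g a b : cont2 g ->
  RInt (fun s => RInt (fun t => g s t) 0 a) 0 b = RInt (fun t => RInt (fun s => g s t) 0 b) 0 a.
Proof. intros H.
  set (phi := fun s => RInt (fun t => g s t) 0 a).
  assert (Hphi : cf phi) by (apply cf_phi; auto).
  set (F := fun x => RInt phi 0 x).
  set (G := fun x => RInt (fun t => RInt (fun s => g s t) 0 x) 0 a).
  assert (DF : forall x, is_derive F x (phi x)).
  { intro x. apply (is_derive_RInt phi (RInt phi 0) 0 x).
    - apply filter_forall. intro y. apply RInt_correct. apply exR; auto.
    - apply cf_cont; auto. }
  assert (Dd : forall t u, is_derive (fun z => RInt (fun s => g s t) 0 z) u (g u t)).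
  { intros t u. apply (is_derive_RInt (fun s => g s t) (RInt (fun s => g s t) 0) 0 u).
    - apply filter_forall. intro y. apply (RInt_correct (V := R_CompleteNormedModule)). apply exR. apply cf_sl2; auto.
    - apply cf_cont. apply cf_sl2; auto. }
  assert (DG : forall x, is_derive G x (phi x)).
  { intro x. unfold G.
    assert (E : phi x = RInt (fun t => Derive (fun u => RInt (fun s => g s t) 0 u) x) 0 a).
    { unfold phi. apply RInt_ext. intros t _. symmetry. apply is_derive_unique. apply Dd. }
    rewrite E.
    apply (is_derive_RInt_param (fun u t => RInt (fun s => g s t) 0 u) 0 a x).
    - apply filter_forall. intros y t _. eexists. apply Dd.
    - intros t _. apply continuity_2d_pt_ext with (f := g); [|apply H].
      intros u v. symmetry. apply is_derive_unique. apply Dd.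
    - apply filter_forall. intro y. apply exR. apply PC; auto. }
  assert (Z : forall x, is_derive (fun x => F x - G x) x 0).
  { intro x. replace 0 with (phi x - phi x) by ring. apply (is_derive_minus F G); auto. }
  pose proof (is_RInt_derive (fun x => F x - G x) (fun _ => 0) 0 b (fun x _ => Z x)
    (fun x _ => continuous_const 0 x)) as I.
  apply is_RInt_unique in I. rewrite RInt_const in I.
  unfold F, G in I. rewrite !RInt_point in I. unfold minus, plus, opp, scal, zero in I; simpl in I.
  unfold mult in I; simpl in I.
  rewrite (RInt_ext (fun t => RInt (fun s => g s t) 0 0) (fun _ => 0)) in I.
  2:{ intros. apply (RInt_point (V := R_CompleteNormedModule)). }
  rewrite RInt_const in I. unfold scal in I; simpl in I; unfold mult in I; simpl in I.
  unfold F, G in *. lra. Qed.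


From Coquelicot Require Import Coquelicot.

Lemma per_nat {T : Type} (h : R -> T) : (forall x, h (x + 2 * PI) = h x) ->
  forall (k : nat) x, h (x + 2 * PI * INR k) = h x.
Proof. intros H k. induction k; intro x.
  - simpl. f_equal. ring.
  - rewrite S_INR. replace (x + 2 * PI * (INR k + 1)) with ((x + 2 * PI * INR k) + 2 * PI) by ring.
    rewrite H. apply IHk. Qed.

Lemma per_Z {T : Type} (h : R -> T) : (forall x, h (x + 2 * PI) = h x) ->
  forall (k : Z) x, h (x + 2 * PI * IZR k) = h x.
Proof. intros H k x. destruct (Z_le_gt_dec 0 k) as [hk|hk].
  - rewrite <- (Z2Nat.id k) by exact hk. rewrite <- INR_IZR_INZ. apply per_nat; auto.
  - replace k with (- Z.of_nat (Z.to_nat (- k)))%Z by lia. rewrite opp_IZR, <- INR_IZR_INZ.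
    rewrite <- (per_nat h H (Z.to_nat (- k)) (x + 2 * PI * - INR (Z.to_nat (- k)))).
    f_equal. ring. Qed.

Lemma cos_perZ k x : cos (x + 2 * PI * IZR k) = cos x.
Proof. apply (per_Z cos). intro y. rewrite cos_plus, cos_2PI, sin_2PI. ring. Qed.
Lemma sin_perZ k x : sin (x + 2 * PI * IZR k) = sin x.
Proof. apply (per_Z sin). intro y. rewrite sin_plus, cos_2PI, sin_2PI. ring. Qed.

Lemma lin2_cont (p q : R) x y : continuity_2d_pt (fun u v => p * u + q * v) x y.
Proof. apply continuity_2d_pt_plus; apply continuity_2d_pt_mult;
  (apply continuity_2d_pt_const || apply continuity_2d_pt_id1 || apply continuity_2d_pt_id2). Qed.

Lemma cont2_comp_lin g a b c d : cont2 g ->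
  cont2 (fun s t => g (a * s + b * t) (c * s + d * t)).
Proof. intros H x y eps. destruct (H (a * x + b * y) (c * x + d * y) eps) as [del Hd].
  set (w := Rabs a + Rabs b + Rabs c + Rabs d + 1).
  assert (Hw : 0 < w) by (unfold w; pose proof (Rabs_pos a); pose proof (Rabs_pos b);
     pose proof (Rabs_pos c); pose proof (Rabs_pos d); lra).
  assert (Hdp : 0 < del / w) by (apply Rdiv_lt_0_compat; [apply cond_pos|auto]).
  exists (mkposreal _ Hdp). simpl. intros u v Hu Hv.
  assert (Hdel : forall e f, Rabs (e * u + f * v - (e * x + f * y)) <= (Rabs e + Rabs f) * (del / w)).
  { intros e f. replace (e * u + f * v - (e * x + f * y)) with (e * (u - x) + f * (v - y)) by ring.
    eapply Rle_trans; [apply Rabs_triang|]. rewrite !Rabs_mult.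
    pose proof (Rabs_pos e). pose proof (Rabs_pos f). nra. }
  assert (Hlt : forall e f, Rabs e + Rabs f <= w - 1 -> (Rabs e + Rabs f) * (del / w) < del).
  { intros e f Hef. pose proof (cond_pos del). pose proof (Rabs_pos e). pose proof (Rabs_pos f).
    apply Rle_lt_trans with ((w - 1) * (del / w)); [nra|].
    apply (Rmult_lt_reg_r w); auto. field_simplify; lra. }
  apply Hd.
  - eapply Rle_lt_trans; [apply Hdel|]. apply Hlt. unfold w. pose proof (Rabs_pos c); pose proof (Rabs_pos d); lra.
  - eapply Rle_lt_trans; [apply Hdel|]. apply Hlt. unfold w. pose proof (Rabs_pos a); pose proof (Rabs_pos b); lra.
Qed.

Lemma cont2_h_lin h p q : cf h -> cont2 (fun s t => h (p * s + q * t)).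
Proof. intros H x y. apply (continuity_1d_2d_pt_comp h (fun u v => p * u + q * v)); [apply H|apply lin2_cont]. Qed.

Definition TI (g : R -> R -> R) : R := RInt (fun s => RInt (fun t => g s t) 0 (2 * PI)) 0 (2 * PI).

Lemma torus_TI g : cont2 g -> torus_integral g = / (4 * PI ^ 2) * TI g.
Proof. intros H. unfold torus_integral, TI. f_equal.
  assert (E : (fun s => Rint (fun t => g s t) 0 (2 * PI)) = (fun s => RInt (fun t => g s t) 0 (2 * PI))).
  { apply functional_extensionality. intro s. apply Rint_RInt; [apply cont2_slice; auto|pose proof PI_RGT_0; lra]. }
  rewrite E. apply Rint_RInt; [apply cf_phi; auto|pose proof PI_RGT_0; lra]. Qed.

Definition per2 (g : R -> R -> R) : Prop :=
  (forall s t, g (s + 2 * PI) t = g s t) /\ (forall s t, g s (t + 2 * PI) = g s t).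
Definition Good2 g := cont2 g /\ per2 g.

Lemma TI_lower g e f c : Good2 g -> (e = 1 \/ e = -1) -> (f = 1 \/ f = -1) ->
  TI (fun s t => g (e * s) (c * s + f * t)) = TI g.
Proof. intros [Hc [P1 P2]] He Hf. unfold TI.
  rewrite (RInt_ext (fun s => RInt (fun t => g (e * s) (c * s + f * t)) 0 (2 * PI))
                    (fun s => RInt (fun t => g (e * s) t) 0 (2 * PI))).
  2:{ intros s _. apply (lin_per (g (e * s))); auto. apply cont2_slice; auto. intro x; apply P2. }
  set (phi := fun s => RInt (fun t => g s t) 0 (2 * PI)).
  assert (Hphi : cf phi) by (apply cf_phi; auto).
  assert (Pphi : per1 phi).
  { intro x. unfold phi. apply RInt_ext. intros. apply P1. }
  pose proof (lin_per phi Hphi Pphi 0 e He) as L.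
  transitivity (RInt phi 0 (2 * PI)); [|reflexivity]. rewrite <- L.
  apply RInt_ext. intros x _. unfold phi. replace (0 + e * x) with (e * x) by ring. reflexivity. Qed.

Lemma TI_swap g : cont2 g -> TI (fun s t => g t s) = TI g.
Proof. intros H. unfold TI. apply (fubini (fun s t => g t s)). apply cont2_swap; auto. Qed.


From Coquelicot Require Import Coquelicot.

Definition compM (g : R -> R -> R) (B : mat2) : R -> R -> R :=
  fun s t => g (IZR (ma B) * s + IZR (mb B) * t) (IZR (mc B) * s + IZR (md B) * t).

Lemma per2_Z g : per2 g -> forall k l s t, g (s + 2 * PI * IZR k) (t + 2 * PI * IZR l) = g s t.
Proof. intros [P1 P2] k l s t.
  rewrite (per_Z (fun x => g x (t + 2 * PI * IZR l))) by (intro; apply P1).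
  apply (per_Z (fun y => g s y)). intro; apply P2. Qed.

Lemma Good2_comp g B : Good2 g -> Good2 (compM g B).
Proof. intros [Hc Hp]. split.
  - unfold compM. apply cont2_comp_lin; auto.
  - split; intros s t; unfold compM.
    + transitivity (g ((IZR (ma B) * s + IZR (mb B) * t) + 2 * PI * IZR (ma B))
                      ((IZR (mc B) * s + IZR (md B) * t) + 2 * PI * IZR (mc B))); [f_equal; ring|apply per2_Z; auto].
    + transitivity (g ((IZR (ma B) * s + IZR (mb B) * t) + 2 * PI * IZR (mb B))
                      ((IZR (mc B) * s + IZR (md B) * t) + 2 * PI * IZR (md B))); [f_equal; ring|apply per2_Z; auto].
Qed.

Lemma compM_mul g B1 B2 : compM (compM g B1) B2 = compM g (mat2_mul B1 B2).
Proof. apply functional_extensionality; intro s. apply functional_extensionality; intro t.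
  unfold compM, mat2_mul; simpl. zr. f_equal; ring. Qed.

Definition InvM (B : mat2) : Prop := forall g, Good2 g -> TI (compM g B) = TI g.

Lemma InvM_mul B1 B2 : InvM B1 -> InvM B2 -> InvM (mat2_mul B1 B2).
Proof. intros H1 H2 g Hg. rewrite <- compM_mul. rewrite H2 by (apply Good2_comp; auto). apply H1; auto. Qed.

Lemma mul_id_r B : mat2_mul B mat2_id = B.
Proof. destruct B; unfold mat2_mul, mat2_id; simpl; f_equal; ring. Qed.

Lemma InvM_from B E E' : InvM (mat2_mul B E) -> InvM E' -> mat2_mul E E' = mat2_id -> InvM B.
Proof. intros H1 H2 HE. rewrite <- (mul_id_r B), <- HE, mat2_mul_assoc. apply InvM_mul; auto. Qed.

Lemma pm1 (a d : Z) : (a * d = 1 \/ a * d = -1)%Z -> (a = 1 \/ a = -1)%Z /\ (d = 1 \/ d = -1)%Z.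
Proof. intros [H|H].
  - pose proof (Z.mul_eq_1 _ _ H). rewrite Z.mul_comm in H. pose proof (Z.mul_eq_1 _ _ H). lia.
  - assert (H' : ((- a) * d = 1)%Z) by lia. pose proof (Z.mul_eq_1 _ _ H').
    rewrite Z.mul_comm in H'. pose proof (Z.mul_eq_1 _ _ H'). lia. Qed.

Lemma pm1R (a : Z) : (a = 1 \/ a = -1)%Z -> IZR a = 1 \/ IZR a = -1.
Proof. intros [->| ->]; [left|right]; reflexivity. Qed.

Lemma InvM_lower B : inGL2Z B -> mb B = 0%Z -> InvM B.
Proof. destruct B as [a b c d]; unfold inGL2Z, det2; simpl. intros HG Hb g Hg. subst b.
  assert (Hp : (a * d = 1 \/ a * d = -1)%Z) by lia. destruct (pm1 a d Hp) as [Ha Hd].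
  unfold compM; simpl.
  rewrite <- (TI_lower g (IZR a) (IZR d) (IZR c) Hg (pm1R a Ha) (pm1R d Hd)).
  f_equal. apply functional_extensionality; intro s. apply functional_extensionality; intro t. f_equal; ring. Qed.

Definition Wm := Mat2 0 1 1 0.
Definition Uk (k : Z) := Mat2 1 k 0 1.
Definition Lk (k : Z) := Mat2 1 0 k 1.

Lemma InvM_W : InvM Wm.
Proof. intros g [Hc _]. rewrite <- (TI_swap g Hc). unfold compM, Wm; simpl. f_equal.
  apply functional_extensionality; intro s. apply functional_extensionality; intro t. f_equal; ring. Qed.

Lemma InvM_L k : InvM (Lk k).
Proof. apply InvM_lower; [left; unfold det2, Lk; cbn [ma mb mc md]; ring|reflexivity]. Qed.

Lemma InvM_U k : InvM (Uk k).
Proof. replace (Uk k) with (mat2_mul Wm (mat2_mul (Lk k) Wm)).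
  - apply InvM_mul; [apply InvM_W|apply InvM_mul; [apply InvM_L|apply InvM_W]].
  - unfold Wm, Lk, Uk, mat2_mul; cbn [ma mb mc md]. f_equal; ring. Qed.

Lemma InvM_GL_n n : forall B, inGL2Z B -> (Z.abs (ma B) + Z.abs (mb B) <= Z.of_nat n)%Z -> InvM B.
Proof. induction n as [|n IH]; intros B HG Hn.
  - exfalso. destruct B as [a b c d]; unfold inGL2Z, det2 in HG; simpl in *.
    assert (a = 0%Z /\ b = 0%Z) by lia. destruct H; subst; lia.
  - destruct B as [a b c d]. set (B := Mat2 a b c d) in *. simpl in Hn.
    destruct (Z.eq_dec b 0) as [Hb|Hb]; [apply InvM_lower; auto|].
    destruct (Z.eq_dec a 0) as [Ha|Ha].
    + apply (InvM_from B Wm Wm); [|apply InvM_W|unfold Wm, mat2_mul, mat2_id; simpl; reflexivity].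
      apply InvM_lower.
      * apply GL_mul; [exact HG|right; reflexivity].
      * unfold B. unfold Wm, mat2_mul; simpl. subst a. ring.
    + destruct (Z_le_gt_dec (Z.abs a) (Z.abs b)) as [Hab|Hab].
      * assert (Hk : exists k, (k = 1 \/ k = -1)%Z /\ (Z.abs (a * k + b) < Z.abs b)%Z).
        { destruct (Z_lt_le_dec 0 a), (Z_lt_le_dec 0 b).
          - exists (-1)%Z; lia. - exists 1%Z; lia. - exists 1%Z; lia. - exists (-1)%Z; lia. }
        destruct Hk as [k [Hk1 Hk2]].
        apply (InvM_from B (Uk k) (Uk (- k))); [|apply InvM_U|unfold Uk, mat2_mul, mat2_id; cbn [ma mb mc md]; f_equal; ring].
        apply IH.
        -- apply GL_mul; [exact HG|left; unfold det2, Uk; cbn [ma mb mc md]; ring].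
        -- unfold B. unfold Uk, mat2_mul; cbn [ma mb mc md]. replace (a * 1 + b * 0)%Z with a by ring.
           replace (a * k + b * 1)%Z with (a * k + b)%Z by ring. lia.
      * assert (Hk : exists k, (k = 1 \/ k = -1)%Z /\ (Z.abs (a + b * k) < Z.abs a)%Z).
        { destruct (Z_lt_le_dec 0 a), (Z_lt_le_dec 0 b).
          - exists (-1)%Z; lia. - exists 1%Z; lia. - exists 1%Z; lia. - exists (-1)%Z; lia. }
        destruct Hk as [k [Hk1 Hk2]].
        apply (InvM_from B (Lk k) (Lk (- k))); [|apply InvM_L|unfold Lk, mat2_mul, mat2_id; cbn [ma mb mc md]; f_equal; ring].
        apply IH.
        -- apply GL_mul; [exact HG|left; unfold det2, Lk; cbn [ma mb mc md]; ring].
        -- unfold B. unfold Lk, mat2_mul; cbn [ma mb mc md]. replace (a * 1 + b * k)%Z with (a + b * k)%Z by ring.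
           replace (a * 0 + b * 1)%Z with b by ring. lia.
Qed.

Lemma InvM_GL B : inGL2Z B -> InvM B.
Proof. intro H. apply (InvM_GL_n (Z.to_nat (Z.abs (ma B) + Z.abs (mb B)))); auto. lia. Qed.


From Coquelicot Require Import Coquelicot.

Lemma lin_comp_id (P Q : mat2) s t : mat2_mul P Q = mat2_id ->
  IZR (ma P) * (IZR (ma Q) * s + IZR (mb Q) * t) + IZR (mb P) * (IZR (mc Q) * s + IZR (md Q) * t) = s /\
  IZR (mc P) * (IZR (ma Q) * s + IZR (mb Q) * t) + IZR (md P) * (IZR (mc Q) * s + IZR (md Q) * t) = t.
Proof. intro H.
  assert (H1 := f_equal ma H). assert (H2 := f_equal mb H). assert (H3 := f_equal mc H). assert (H4 := f_equal md H).
  unfold mat2_mul, mat2_id in *; cbn [ma mb mc md] in *.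
  apply (f_equal IZR) in H1, H2, H3, H4. zr. rewrite !plus_IZR, !mult_IZR in H1, H2, H3, H4.
  split.
  - transitivity ((IZR (ma P) * IZR (ma Q) + IZR (mb P) * IZR (mc Q)) * s + (IZR (ma P) * IZR (mb Q) + IZR (mb P) * IZR (md Q)) * t); [ring|].
    rewrite H1, H2. simpl. ring.
  - transitivity ((IZR (mc P) * IZR (ma Q) + IZR (md P) * IZR (mc Q)) * s + (IZR (mc P) * IZR (mb Q) + IZR (md P) * IZR (md Q)) * t); [ring|].
    rewrite H3, H4. simpl. ring. Qed.

Lemma Rabs_le_Cmod_fst z : Rabs (fst z) <= Cmod z.
Proof. unfold Cmod. rewrite <- sqrt_Rsqr_abs. apply sqrt_le_1_alt. unfold Rsqr. pose proof (pow2_ge_0 (snd z)). simpl. lra. Qed.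
Lemma Rabs_le_Cmod_snd z : Rabs (snd z) <= Cmod z.
Proof. unfold Cmod. rewrite <- sqrt_Rsqr_abs. apply sqrt_le_1_alt. unfold Rsqr. pose proof (pow2_ge_0 (fst z)). simpl. lra. Qed.

Lemma CT2_good f : is_CT2 f -> Good2 (fun s t => fst (f s t)) /\ Good2 (fun s t => snd (f s t)).
Proof. intros [P1 [P2 Hc]]. split; split.
  - intros x y eps. destruct (Hc x y eps (cond_pos eps)) as [d [Hd H]].
    exists (mkposreal d Hd). intros u v Hu Hv. simpl in *. eapply Rle_lt_trans; [|apply (H u v Hu Hv)].
    apply (Rabs_le_Cmod_fst (Csub (f u v) (f x y))).
  - split; intros s t; [rewrite P1|rewrite P2]; reflexivity.
  - intros x y eps. destruct (Hc x y eps (cond_pos eps)) as [d [Hd H]].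
    exists (mkposreal d Hd). intros u v Hu Hv. simpl in *. eapply Rle_lt_trans; [|apply (H u v Hu Hv)].
    apply (Rabs_le_Cmod_snd (Csub (f u v) (f x y))).
  - split; intros s t; [rewrite P1|rewrite P2]; reflexivity.
Qed.

Definition FR (f : torus_fun) (m n : Z) : R -> R -> R :=
  fun s t => fst (f s t) * cos (IZR m * s + IZR n * t) + snd (f s t) * sin (IZR m * s + IZR n * t).
Definition FI (f : torus_fun) (m n : Z) : R -> R -> R :=
  fun s t => snd (f s t) * cos (IZR m * s + IZR n * t) - fst (f s t) * sin (IZR m * s + IZR n * t).

Lemma fourier_eq f m n : fourier f m n = (torus_integral (FR f m n), torus_integral (FI f m n)).
Proof. reflexivity. Qed.

Lemma cf_cos : cf cos. Proof. intro x. apply continuity_cos. Qed.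
Lemma cf_sin : cf sin. Proof. intro x. apply continuity_sin. Qed.

Lemma FR_good f m n : is_CT2 f -> Good2 (FR f m n).
Proof. intros H. destruct (CT2_good f H) as [[C1 [P1 Q1]] [C2 [P2 Q2]]]. split.
  - intros x y. unfold FR. apply continuity_2d_pt_plus; apply continuity_2d_pt_mult; auto.
    + apply (cont2_h_lin cos); apply cf_cos.
    + apply (cont2_h_lin sin); apply cf_sin.
  - split; intros s t; unfold FR; simpl in *.
    + rewrite P1, P2. replace (IZR m * (s + 2 * PI) + IZR n * t) with ((IZR m * s + IZR n * t) + 2 * PI * IZR m) by ring.
      rewrite cos_perZ, sin_perZ. reflexivity.
    + rewrite Q1, Q2. replace (IZR m * s + IZR n * (t + 2 * PI)) with ((IZR m * s + IZR n * t) + 2 * PI * IZR n) by ring.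
      rewrite cos_perZ, sin_perZ. reflexivity. Qed.

Lemma FI_good f m n : is_CT2 f -> Good2 (FI f m n).
Proof. intros H. destruct (CT2_good f H) as [[C1 [P1 Q1]] [C2 [P2 Q2]]]. split.
  - intros x y. unfold FI. apply continuity_2d_pt_minus; apply continuity_2d_pt_mult; auto.
    + apply (cont2_h_lin cos); apply cf_cos.
    + apply (cont2_h_lin sin); apply cf_sin.
  - split; intros s t; unfold FI; simpl in *.
    + rewrite P1, P2. replace (IZR m * (s + 2 * PI) + IZR n * t) with ((IZR m * s + IZR n * t) + 2 * PI * IZR m) by ring.
      rewrite cos_perZ, sin_perZ. reflexivity.
    + rewrite Q1, Q2. replace (IZR m * s + IZR n * (t + 2 * PI)) with ((IZR m * s + IZR n * t) + 2 * PI * IZR n) by ring.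
      rewrite cos_perZ, sin_perZ. reflexivity. Qed.

Lemma CT2_piA A f : is_CT2 f -> is_CT2 (piA A f).
Proof. intros [P1 [P2 Hc]].
  assert (PZ : forall k l s t, f (s + 2 * PI * IZR k) (t + 2 * PI * IZR l) = f s t).
  { intros k l s t. rewrite (per_Z (fun x => f x (t + 2 * PI * IZR l))) by (intro; apply P1).
    apply (per_Z (fun y => f s y)). intro; apply P2. }
  unfold piA. split; [|split].
  - intros s t. rewrite <- (PZ (ma A) (mc A) (IZR (ma A) * s + IZR (mb A) * t) (IZR (mc A) * s + IZR (md A) * t)). f_equal; ring.
  - intros s t. rewrite <- (PZ (mb A) (md A) (IZR (ma A) * s + IZR (mb A) * t) (IZR (mc A) * s + IZR (md A) * t)). f_equal; ring.
  - intros x y eps He.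
    destruct (Hc (IZR (ma A) * x + IZR (mb A) * y) (IZR (mc A) * x + IZR (md A) * y) eps He) as [del [Hdp Hd]].
    set (a := IZR (ma A)) in *. set (b := IZR (mb A)) in *. set (c := IZR (mc A)) in *. set (d := IZR (md A)) in *.
    set (w := Rabs a + Rabs b + Rabs c + Rabs d + 1).
    assert (Hw : 0 < w) by (unfold w; pose proof (Rabs_pos a); pose proof (Rabs_pos b);
       pose proof (Rabs_pos c); pose proof (Rabs_pos d); lra).
    assert (Hdp' : 0 < del / w) by (apply Rdiv_lt_0_compat; auto).
    exists (del / w). split; auto. intros u v Hu Hv.
    assert (Hdel : forall e f, Rabs (e * u + f * v - (e * x + f * y)) <= (Rabs e + Rabs f) * (del / w)).
    { intros e f0. replace (e * u + f0 * v - (e * x + f0 * y)) with (e * (u - x) + f0 * (v - y)) by ring.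
      eapply Rle_trans; [apply Rabs_triang|]. rewrite !Rabs_mult.
      pose proof (Rabs_pos e). pose proof (Rabs_pos f0). nra. }
    assert (Hlt : forall e f, Rabs e + Rabs f <= w - 1 -> (Rabs e + Rabs f) * (del / w) < del).
    { intros e f0 Hef. pose proof (Rabs_pos e). pose proof (Rabs_pos f0).
      apply Rle_lt_trans with ((w - 1) * (del / w)); [nra|].
      apply (Rmult_lt_reg_r w); auto. field_simplify; lra. }
    apply Hd.
    + eapply Rle_lt_trans; [apply Hdel|]. apply Hlt. unfold w. pose proof (Rabs_pos c); pose proof (Rabs_pos d); lra.
    + eapply Rle_lt_trans; [apply Hdel|]. apply Hlt. unfold w. pose proof (Rabs_pos a); pose proof (Rabs_pos b); lra.
Qed.

Lemma arg_transfer A (m n : Z) s t : inGL2Z A ->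
  let I := mat2_inv A in
  IZR (m * ma I + n * mc I) * (IZR (ma A) * s + IZR (mb A) * t) +
  IZR (m * mb I + n * md I) * (IZR (mc A) * s + IZR (md A) * t) = IZR m * s + IZR n * t.
Proof. intros HG I. destruct (lin_comp_id I A s t (mul_inv_l A HG)) as [E1 E2].
  zr. transitivity (IZR m * (IZR (ma I) * (IZR (ma A) * s + IZR (mb A) * t) + IZR (mb I) * (IZR (mc A) * s + IZR (md A) * t))
    + IZR n * (IZR (mc I) * (IZR (ma A) * s + IZR (mb A) * t) + IZR (md I) * (IZR (mc A) * s + IZR (md A) * t))); [ring|].
  rewrite E1, E2. reflexivity. Qed.

Lemma fourier_piA A f m n : inGL2Z A -> is_CT2 f ->
  fourier (piA A f) m n =
  fourier f (m * ma (mat2_inv A) + n * mc (mat2_inv A))%Z (m * mb (mat2_inv A) + n * md (mat2_inv A))%Z.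
Proof. intros HG Hf. rewrite !fourier_eq.
  pose proof (CT2_piA A f Hf) as Hf'.
  f_equal.
  - rewrite !torus_TI by (first [apply (FR_good _ _ _ Hf)|apply (FR_good _ _ _ Hf')]). f_equal.
    rewrite <- (InvM_GL A HG _ (FR_good f _ _ Hf)). f_equal.
    apply functional_extensionality; intro s. apply functional_extensionality; intro t.
    unfold FR, compM, piA. rewrite (arg_transfer A m n s t HG). reflexivity.
  - rewrite !torus_TI by (first [apply (FI_good _ _ _ Hf)|apply (FI_good _ _ _ Hf')]). f_equal.
    rewrite <- (InvM_GL A HG _ (FI_good f _ _ Hf)). f_equal.
    apply functional_extensionality; intro s. apply functional_extensionality; intro t.
    unfold FI, compM, piA. rewrite (arg_transfer A m n s t HG). reflexivity.
Qed.


From Coquelicot Require Import Coquelicot.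

Lemma into al A f : Gd al A -> in_A al f -> in_A al (piA A f).
Proof. intros HA [Hf Hz]. pose proof HA as [HG _]. split; [apply CT2_piA; auto|].
  intros m n Hmn. rewrite fourier_piA by auto. apply Hz.
  pose proof (Gd_inv al A HA) as [_ [EI PI0]].
  set (I := mat2_inv A) in *. unfold Eig in EI.
  replace (IZR (m * ma I + n * mc I) + al * IZR (m * mb I + n * md I))
    with (IZR m * (IZR (ma I) + IZR (mb I) * al) + IZR n * (IZR (mc I) + IZR (md I) * al)) by (zr; ring).
  rewrite EI. fold (lam al I).
  replace (IZR m * lam al I + IZR n * (lam al I * al)) with (lam al I * (IZR m + al * IZR n)) by ring.
  nra. Qed.

Lemma piA_inv A g : inGL2Z A -> piA A (piA (mat2_inv A) g) = g.
Proof. intros HG. apply functional_extensionality; intro s. apply functional_extensionality; intro t.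
  unfold piA. destruct (lin_comp_id (mat2_inv A) A s t (mul_inv_l A HG)) as [E1 E2].
  rewrite E1, E2. reflexivity. Qed.

Lemma supnorm_piA A f : inGL2Z A -> supnorm (piA A f) = supnorm f.
Proof. intros HG. unfold supnorm.
  replace (fun x => exists s t, x = Defs.Cmod (piA A f s t)) with (fun x => exists s t, x = Defs.Cmod (f s t)); [reflexivity|].
  apply functional_extensionality; intro x. apply propositional_extensionality. split.
  - intros [s [t Hx]].
    destruct (lin_comp_id A (mat2_inv A) s t (mul_inv_r A HG)) as [E1 E2].
    exists (IZR (ma (mat2_inv A)) * s + IZR (mb (mat2_inv A)) * t), (IZR (mc (mat2_inv A)) * s + IZR (md (mat2_inv A)) * t).
    unfold piA. rewrite E1, E2. exact Hx.
  - intros [s [t Hx]]. unfold piA in Hx. eexists; eexists; exact Hx. Qed.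

Lemma sufficiency al A : Gd al A -> restricts_to_isometric_aut al A.
Proof. intros HA. pose proof HA as [HG _]. split; [|split].
  - intros f Hf. apply into; auto.
  - intros g Hg. exists (piA (mat2_inv A) g). split.
    + apply into; auto. apply Gd_inv; auto.
    + apply piA_inv; auto.
  - intros f _. apply supnorm_piA; auto. Qed.


From Coquelicot Require Import Coquelicot.

Lemma cf_h_lin h u q : cf h -> cf (fun t => h (u + q * t)).
Proof. intros H x. apply (continuity_pt_comp (fun t => u + q * t) h x); [|apply H].
  apply continuity_pt_plus; [apply continuity_pt_const; intros a b; reflexivity|].
  apply continuity_pt_mult; [apply continuity_pt_const; intros a b; reflexivity|apply derivable_continuous_pt, derivable_pt_id]. Qed.

Lemma int_cos_lin (u : R) (q : Z) : q <> 0%Z -> RInt (fun t => cos (u + IZR q * t)) 0 (2 * PI) = 0.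
Proof. intros Hq. apply not_0_IZR in Hq.
  assert (H : is_RInt (fun t => cos (u + IZR q * t)) 0 (2 * PI)
     (minus (sin (u + IZR q * (2 * PI)) / IZR q) (sin (u + IZR q * 0) / IZR q))).
  { apply (is_RInt_derive (fun t => sin (u + IZR q * t) / IZR q)).
    - intros x _. auto_derive; [auto|field; auto].
    - intros x _. apply (cf_cont (fun t => cos (u + IZR q * t))). apply cf_h_lin, cf_cos. }
  rewrite (is_RInt_unique _ _ _ _ H).
  unfold minus, plus, opp; simpl. replace (u + IZR q * (2 * PI)) with (u + 2 * PI * IZR q) by ring.
  rewrite sin_perZ. replace (u + IZR q * 0) with u by ring. field. auto. Qed.

Lemma int_sin_lin (u : R) (q : Z) : q <> 0%Z -> RInt (fun t => sin (u + IZR q * t)) 0 (2 * PI) = 0.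
Proof. intros Hq. apply not_0_IZR in Hq.
  assert (H : is_RInt (fun t => sin (u + IZR q * t)) 0 (2 * PI)
     (minus (- cos (u + IZR q * (2 * PI)) / IZR q) (- cos (u + IZR q * 0) / IZR q))).
  { apply (is_RInt_derive (fun t => - cos (u + IZR q * t) / IZR q)).
    - intros x _. auto_derive; [auto|field; auto].
    - intros x _. apply (cf_cont (fun t => sin (u + IZR q * t))). apply cf_h_lin, cf_sin. }
  rewrite (is_RInt_unique _ _ _ _ H).
  unfold minus, plus, opp; simpl. replace (u + IZR q * (2 * PI)) with (u + 2 * PI * IZR q) by ring.
  rewrite cos_perZ. replace (u + IZR q * 0) with u by ring. field. auto. Qed.

Lemma RInt_0 a b : RInt (fun _ => 0) a b = 0.
Proof. rewrite RInt_const. unfold scal; simpl; unfold mult; simpl. ring. Qed.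

Lemma TI_trig (h : R -> R) (p q : Z) : (h = cos \/ h = sin) -> (p, q) <> (0%Z, 0%Z) ->
  TI (fun s t => h (IZR p * s + IZR q * t)) = 0.
Proof. intros Hh Hpq. unfold TI. destruct (Z.eq_dec q 0) as [Hq|Hq].
  - subst q. assert (Hp : p <> 0%Z) by (intro; subst; apply Hpq; reflexivity).
    rewrite (RInt_ext _ (fun s => scal (2 * PI) (h (0 + IZR p * s)))).
    + rewrite (RInt_scal (V := R_CompleteNormedModule)).
      * destruct Hh; subst h; [rewrite int_cos_lin|rewrite int_sin_lin]; auto;
        unfold scal; simpl; unfold mult; simpl; ring.
      * apply exR. apply cf_h_lin. destruct Hh; subst h; [apply cf_cos|apply cf_sin].
    + intros s _. rewrite (RInt_ext _ (fun _ => h (0 + IZR p * s))).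
      * rewrite RInt_const. f_equal. ring.
      * intros t _. f_equal. ring.
  - rewrite (RInt_ext _ (fun _ => 0)); [apply RInt_0|].
    intros s _. destruct Hh; subst h; [apply int_cos_lin|apply int_sin_lin]; auto.
Qed.

Definition ek (m n : Z) : torus_fun := fun s t => (cos (IZR m * s + IZR n * t), sin (IZR m * s + IZR n * t)).

Lemma Cmod_le (x y : R) : Defs.Cmod (x, y) <= Rabs x + Rabs y.
Proof. unfold Defs.Cmod; simpl. rewrite <- (sqrt_Rsqr (Rabs x + Rabs y)) by (pose proof (Rabs_pos x); pose proof (Rabs_pos y); lra).
  apply sqrt_le_1_alt. unfold Rsqr. pose proof (Rabs_pos x); pose proof (Rabs_pos y).
  replace (x * (x * 1)) with (Rabs x * Rabs x) by (rewrite <- Rabs_mult; rewrite Rabs_right by nra; ring).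
  replace (y * (y * 1)) with (Rabs y * Rabs y) by (rewrite <- Rabs_mult; rewrite Rabs_right by nra; ring).
  nra. Qed.

Lemma ek_CT2 m n : is_CT2 (ek m n).
Proof. unfold ek. split; [|split].
  - intros s t. replace (IZR m * (s + 2 * PI) + IZR n * t) with ((IZR m * s + IZR n * t) + 2 * PI * IZR m) by ring.
    rewrite cos_perZ, sin_perZ. reflexivity.
  - intros s t. replace (IZR m * s + IZR n * (t + 2 * PI)) with ((IZR m * s + IZR n * t) + 2 * PI * IZR n) by ring.
    rewrite cos_perZ, sin_perZ. reflexivity.
  - intros s t eps He. assert (He2 : 0 < eps / 2) by lra.
    destruct (cont2_h_lin cos (IZR m) (IZR n) cf_cos s t (mkposreal _ He2)) as [d1 H1].
    destruct (cont2_h_lin sin (IZR m) (IZR n) cf_sin s t (mkposreal _ He2)) as [d2 H2].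
    exists (Rmin d1 d2). split; [apply Rmin_pos; apply cond_pos|]. intros s' t' Hs Ht.
    unfold Csub; simpl. eapply Rle_lt_trans; [apply Cmod_le|].
    assert (A1 := H1 s' t' (Rlt_le_trans _ _ _ Hs (Rmin_l _ _)) (Rlt_le_trans _ _ _ Ht (Rmin_l _ _))).
    assert (A2 := H2 s' t' (Rlt_le_trans _ _ _ Hs (Rmin_r _ _)) (Rlt_le_trans _ _ _ Ht (Rmin_r _ _))).
    simpl in A1, A2. lra. Qed.

Lemma fourier_ek m n m' n' : fourier (ek m n) m' n' =
  (torus_integral (fun s t => cos (IZR (m - m') * s + IZR (n - n') * t)),
   torus_integral (fun s t => sin (IZR (m - m') * s + IZR (n - n') * t))).
Proof. rewrite fourier_eq. f_equal; f_equal; apply functional_extensionality; intro s;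
  apply functional_extensionality; intro t; unfold FR, FI, ek; simpl;
  replace (IZR (m - m') * s + IZR (n - n') * t) with ((IZR m * s + IZR n * t) - (IZR m' * s + IZR n' * t)) by (zr; ring).
  - rewrite cos_minus. ring.
  - rewrite sin_minus. ring. Qed.

Lemma torus_trig h p q : (h = cos \/ h = sin) -> (p, q) <> (0%Z, 0%Z) ->
  torus_integral (fun s t => h (IZR p * s + IZR q * t)) = 0.
Proof. intros Hh Hpq. rewrite torus_TI.
  - rewrite TI_trig; auto. ring.
  - apply cont2_h_lin. destruct Hh; subst; [apply cf_cos|apply cf_sin]. Qed.

Lemma fourier_ek_diff m n m' n' : (m', n') <> (m, n) -> fourier (ek m n) m' n' = (0, 0).
Proof. intros H. rewrite fourier_ek. assert (Hpq : (m - m', n - n')%Z <> (0%Z, 0%Z)).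
  { intro E. injection E. intros. apply H. f_equal; lia. }
  rewrite !torus_trig; auto. Qed.

Lemma fourier_ek_same m n : fourier (ek m n) m n = (1, 0).
Proof. rewrite fourier_ek. rewrite !Z.sub_diag. simpl.
  assert (P := PI_RGT_0).
  f_equal.
  - rewrite (torus_TI (fun s t => cos (0 * s + 0 * t))) by (apply cont2_h_lin, cf_cos).
    unfold TI. rewrite (RInt_ext _ (fun _ => 2 * PI)).
    + rewrite RInt_const. unfold scal; simpl; unfold mult; simpl. field. lra.
    + intros s _. rewrite (RInt_ext _ (fun _ => 1)).
      * rewrite RInt_const. unfold scal; simpl; unfold mult; simpl. ring.
      * intros t _. replace (0 * s + 0 * t) with 0 by ring. apply cos_0.
  - rewrite (torus_TI (fun s t => sin (0 * s + 0 * t))) by (apply cont2_h_lin, cf_sin).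
    unfold TI. rewrite (RInt_ext _ (fun _ => 0)); [rewrite RInt_0; ring|].
    intros s _. rewrite (RInt_ext _ (fun _ => 0)); [apply RInt_0|].
    intros t _. replace (0 * s + 0 * t) with 0 by ring. apply sin_0. Qed.

Lemma ek_in_A al m n : irrational al -> 0 <= IZR m + al * IZR n -> in_A al (ek m n).
Proof. intros Hi H. split; [apply ek_CT2|]. intros m' n' H'. apply fourier_ek_diff.
  intro E. injection E; intros; subst. lra. Qed.

Lemma piA_ek A m n : piA A (ek m n) = ek (m * ma A + n * mc A) (m * mb A + n * md A).
Proof. apply functional_extensionality; intro s. apply functional_extensionality; intro t.
  unfold piA, ek. f_equal; f_equal; zr; ring. Qed.


From Coquelicot Require Import Coquelicot.

Lemma half_plane al u v : irrational al ->
  (forall m n : Z, 0 < IZR m + al * IZR n -> 0 <= IZR m * u + IZR n * v) -> v = u * al /\ 0 <= u.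
Proof. intros Hi H.
  assert (Hu : 0 <= u) by (specialize (H 1%Z 0%Z); simpl in H; lra).
  split; auto. apply NNPP. intro Hw.
  set (w := v - u * al).
  assert (Hw0 : w <> 0) by (unfold w; lra).
  assert (Haw : 0 < Rabs w) by (apply Rabs_pos_lt; auto).
  set (N := Z.max 1 (up (u / Rabs w))).
  assert (HN1 : 1 <= IZR N) by (apply IZR_le; unfold N; lia).
  assert (HN2 : u / Rabs w < IZR N).
  { destruct (archimed (u / Rabs w)) as [A _]. eapply Rlt_le_trans; [exact A|]. apply IZR_le. unfold N; lia. }
  assert (HNw : u < IZR N * Rabs w).
  { apply (Rmult_lt_compat_r (Rabs w)) in HN2; auto. unfold Rdiv in HN2.
    rewrite Rmult_assoc, Rinv_l in HN2 by lra. lra. }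
  set (n := if Rlt_dec 0 w then (- N)%Z else N).
  assert (Hnw : IZR n * w = - (IZR N * Rabs w)).
  { unfold n. destruct (Rlt_dec 0 w) as [h|h].
    - rewrite opp_IZR, Rabs_right by lra. ring.
    - rewrite Rabs_left by lra. ring. }
  set (m := (fl (- al * IZR n) + 1)%Z).
  pose proof (fl_spec (- al * IZR n)) as F.
  assert (Hr : 0 < IZR m + al * IZR n <= 1) by (unfold m; rewrite plus_IZR; simpl; lra).
  specialize (H m n (proj1 Hr)).
  replace (IZR m * u + IZR n * v) with (u * (IZR m + al * IZR n) + IZR n * w) in H by (unfold w; ring).
  rewrite Hnw in H. nra. Qed.

Lemma necessity al A : irrational al -> inGL2Z A -> restricts_to_isometric_aut al A -> Gd al A.
Proof. intros Hi HG [Hinto _].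
  set (u := lam al A). set (v := IZR (mc A) + IZR (md A) * al).
  assert (H : forall m n : Z, 0 < IZR m + al * IZR n -> 0 <= IZR m * u + IZR n * v).
  { intros m n Hmn. pose proof (Hinto _ (ek_in_A al m n Hi (Rlt_le _ _ Hmn))) as [_ Hz].
    rewrite piA_ek in Hz.
    apply Rnot_lt_le. intro Hneg.
    specialize (Hz (m * ma A + n * mc A)%Z (m * mb A + n * md A)%Z).
    rewrite fourier_ek_same in Hz.
    assert (E : (1, 0) = (0, 0)).
    { apply Hz. unfold u, v, lam in Hneg. zr. lra. }
    injection E. lra. }
  destruct (half_plane al u v Hi H) as [E P].
  split; auto. split.
  - unfold Eig. fold v. rewrite E. reflexivity.
  - destruct (Rle_lt_or_eq_dec _ _ P) as [h|h]; auto.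
    exfalso. apply (lam_ne0 al A HG); [unfold Eig; fold v; rewrite E; reflexivity|]. fold u. auto. Qed.


Theorem mainTheorem12 (alpha : R) (Hpos : 0 < alpha)
  (Hquad : quadratic_irrational alpha) :
  exists A0 : mat2,
    inGL2Z A0 /\ A0 <> mat2_id /\
    restricts_to_isometric_aut alpha A0 /\
    forall A : mat2, inGL2Z A -> restricts_to_isometric_aut alpha A ->
      exists n : Z, A = mat2_powZ A0 n.
Proof.
  pose proof Hquad as [Hi _].
  destruct (min_exists alpha (exists_unit alpha Hquad)) as [A0 [G0 [L0 Hmin]]].
  exists A0. split; [apply G0|]. split.
  - intro E. subst A0. rewrite lam_id in L0. lra.
  - split; [apply sufficiency; auto|].
    intros A HG HR. apply (cyclic alpha A0 Hi G0 L0 Hmin). apply necessity; auto.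
Qed.
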